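(* Let $K$ be an abelian topological group which is compact or torsion, and $X$ a topological vector space over $\mathbf{C}$. Then $P(K,X)=P^0(K,X)$, i.e. every polynomial $p:K\to X$ is constant.
   Context: $\mathbf{Z}_+=\{0,1,2,\dots\}$. A group is torsion if every element has finite order. A continuous $p:K\to X$ is a polynomial of degree at most $n$ if for all $s,t\in K$ the map $m\mapsto p(s+mt)$, $m\in\mathbf{Z}_+$, is a polynomial in $m$ of degree at most $n$ with coefficients in $X$; $P^n(K,X)$ is the space of these and $P(K,X)=\bigcup_{n}P^n(K,X)$. *)

(* Defs.v *)
From HB Require Import structures.
From mathcomp Require Import all_boot all_order all_algebra.
From mathcomp Require Import all_classical all_reals all_analysis.
From mathcomp Require Import complex.
Set Implicit Arguments. Unset Strict Implicit. Unset Printing Implicit Defensive.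
Import Order.TTheory GRing.Theory Num.Theory.
Local Open Scope classical_set_scope.
Local Open Scope ring_scope.

Definition polys_le (K : topologicalZmodType) (F : numDomainType)
  (X : topologicalLmodType F) (n : nat) : set (K -> X) :=
  [set p | continuous p /\
     forall s t : K, exists c : 'I_n.+1 -> X,
       forall m : nat, p (s + t *+ m) = \sum_(k < n.+1) ((m%:R : F) ^+ k) *: c k].

Definition polys (K : topologicalZmodType) (F : numDomainType)
  (X : topologicalLmodType F) : set (K -> X) :=
  \bigcup_(n in [set: nat]) @polys_le K F X n.
Arguments polys_le K {F} X n.
Arguments polys K {F} X.

Definition torsion_group (K : zmodType) : Prop :=
  forall x : K, exists n : nat, (0 < n)%N /\ x *+ n = 0.

(* Main.v *)
Require Import Defs.
From HB Require Import structures.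
From mathcomp Require Import all_boot all_order all_algebra.
From mathcomp Require Import all_classical all_reals all_analysis.
From mathcomp Require Import complex.
Import Order.TTheory GRing.Theory Num.Theory.
Local Open Scope classical_set_scope.
Local Open Scope ring_scope.
Local Open Scope complex_scope.
Section S.
Variables (R : realType) (X : topologicalLmodType R[i]).

Lemma tcvgD {T} (F : set_system T) {FF : Filter F} (f g : T -> X) a b :
  f @ F --> a -> g @ F --> b -> (fun x => f x + g x) @ F --> a + b.
Proof.
move=> fa gb; apply: (@continuous2_cvg _ _ _ _ F _ f g (fun x y => x + y)) => //.
exact: (@add_continuous X (a, b)).
Qed.

Lemma tcvgB {T} (F : set_system T) {FF : Filter F} (f g : T -> X) a b :
  f @ F --> a -> g @ F --> b -> (fun x => f x - g x) @ F --> a - b.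
Proof.
move=> fa gb; apply: (@continuous2_cvg _ _ _ _ F _ f g (fun x y => x - y)) => //.
exact: (@sub_continuous X (a, b)).
Qed.

Lemma tcvgZ {T} (F : set_system T) {FF : Filter F} (s : T -> R[i]^o) (f : T -> X) (k : R[i]^o) (a : X) :
  s @ F --> k -> f @ F --> a -> (fun x => s x *: f x) @ F --> k *: a.
Proof.
move=> sk fa; apply: (@continuous2_cvg _ R[i]^o X X F _ s f (fun x y => x *: y)) => //.
exact: (@scale_continuous R[i] X (k, a)).
Qed.

Lemma ucvg : (fun m : nat => (m%:R : R[i]^o)^-1) @ \oo --> 0.
Proof.
apply/cvgr0Pnorm_lt => e e0.
have := e0; rewrite ltcE /= => /andP[/eqP Ie Re0].
have /cvgr0Pnorm_lt /(_ _ Re0) := @cvg_harmonic R.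
case=> N _ HN; exists N.+1 => // -[|m] //= Hm.
have := HN m Hm; rewrite /harmonic /= ger0_norm; last by rewrite invr_ge0.
move=> hm.
rewrite normfV normr_nat.
have -> : (m.+1%:R : R[i]^o) = (m.+1%:R : R)%:C by rewrite (rmorph_nat (real_complex R)).
rewrite -(fmorphV (real_complex R)) ltcE /= -Ie eqxx /=.
exact: hm.
Qed.

Lemma compact_small (A : set X) : compact A -> forall W, nbhs (0:X) W ->
  \forall r \near (0 : R[i]^o), forall x, A x -> W (r *: x).
Proof.
move=> /compact_near_coveringP cA W W0.
suff : \forall r \near (0:R[i]^o), A `<=` (fun x => W (r *: x)).
  by apply: filterS => r H x Ax; exact: H.
apply: (cA _ (nbhs (0:R[i]^o)) (fun r x => W (r *: x))) => x Ax.
have := @scale_continuous R[i] X (0, x) W.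
rewrite /= scale0r => /(_ W0).
case=> -[B1 B2] /= [B1n B2n] sub.
exists (B2, B1) => //= -[y r] [/= ? ?]; exact: (sub (r, y)).
Qed.

Lemma upow j : (0 < j)%N -> (fun m : nat => (m%:R : R[i]^o)^-1 ^+ j) @ \oo --> 0.
Proof.
elim: j => // -[|j] IH _.
  by under eq_fun do rewrite expr1; exact: ucvg.
under eq_fun do rewrite exprS.
rewrite -(mulr0 (0 : R[i]^o)).
exact: cvgM (ucvg) (IH isT).
Qed.

Lemma tcvg_sum {T} (F : set_system T) {FF : Filter F} n (f : 'I_n -> T -> X) :
  (forall k, f k @ F --> 0) -> (fun x => \sum_(k < n) f k x) @ F --> 0.
Proof.
elim: n f => [|n IH] f hf.
  by under eq_fun do rewrite big_ord0; exact: cvg_cst.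
under eq_fun do rewrite big_ord_recr /=.
have H := @tcvgD _ F _ _ _ _ _ (IH (fun k => f (widen_ord (leqnSn n) k)) (fun k => hf _)) (hf ord_max).
by rewrite addr0 in H; exact: H.
Qed.

Lemma top_zero (hX : hausdorff_space X) (A : set X) (cA : compact A) n
  (c : 'I_n.+2 -> X) :
  (forall m : nat, A (\sum_(k < n.+2) ((m%:R : R[i]) ^+ k) *: c k)) -> c ord_max = 0.
Proof.
move=> hA.
pose u (m : nat) := (m%:R : R[i]^o)^-1.
pose q (m : nat) := \sum_(k < n.+2) ((m%:R : R[i]) ^+ k) *: c k.
pose f m := u m ^+ n.+1 *: q m.
pose g m := \sum_(k < n.+1) (u m ^+ (n.+1 - k)) *: c (widen_ord (leqnSn n.+1) k).
have f0 : f @ \oo --> 0.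
  move=> W W0.
  have hs := @compact_small A cA W W0.
  have H : \forall m \near \oo, forall x, A x -> W (u m ^+ n.+1 *: x).
    exact: (@upow n.+1 (ltn0Sn n) _ hs).
  by apply: filterS H => m /(_ _ (hA m)).
have g0 : g @ \oo --> 0.
  apply: tcvg_sum => k.
  rewrite -(scale0r (c (widen_ord (leqnSn n.+1) k))).
  apply: tcvgZ; last exact: cvg_cst.
  by apply: upow; rewrite subn_gt0.
have fg : (fun m => f m - g m) @ \oo --> c ord_max.
  apply: cvg_near_cst.
  exists 1%N => // m /= m1.
  have um : u m * (m%:R : R[i]) = 1.
    by rewrite /u mulVf // pnatr_eq0 -lt0n.
  have ukm k : (k <= n.+1)%N -> u m ^+ n.+1 * (m%:R : R[i]) ^+ k = u m ^+ (n.+1 - k).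
    move=> kn; rewrite -{1}(subnK kn) exprD -mulrA -exprMn um expr1n mulr1 //.
  rewrite /f /q (big_ord_recr n.+1) /= scalerDr scalerA ukm // subnn expr0 scale1r.
  rewrite scaler_sumr /g.
  have -> : \sum_(i < n.+1)
     u m ^+ n.+1 *: ((m%:R : R[i]) ^+ i *: c (widen_ord (leqnSn n.+1) i)) =
    \sum_(k < n.+1) u m ^+ (n.+1 - k) *: c (widen_ord (leqnSn n.+1) k).
    apply: eq_bigr => i _; rewrite scalerA ukm //.
    exact: ltnW (ltn_ord i).
  by rewrite addrAC subrr add0r.
have fg0 : (fun m => f m - g m) @ \oo --> 0.
  have H := @tcvgB _ _ _ _ _ _ _ f0 g0; rewrite subr0 in H; exact: H.
exact: (cvg_unique hX fg fg0).
Qed.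

Lemma poly_const (hX : hausdorff_space X) (A : set X) (cA : compact A) n
  (c : 'I_n.+1 -> X) :
  (forall m : nat, A (\sum_(k < n.+1) ((m%:R : R[i]) ^+ k) *: c k)) ->
  forall m : nat, \sum_(k < n.+1) ((m%:R : R[i]) ^+ k) *: c k = c ord0.
Proof.
elim: n c => [|n IH] c hA m.
  by rewrite big_ord1 expr0 scale1r.
have c0 := @top_zero hX A cA n c hA.
have E : forall m : nat, \sum_(k < n.+2) ((m%:R : R[i]) ^+ k) *: c k =
   \sum_(k < n.+1) ((m%:R : R[i]) ^+ k) *: c (widen_ord (leqnSn n.+1) k).
  by move=> m'; rewrite (big_ord_recr n.+1) /= c0 scaler0 addr0.
rewrite E IH.
  by congr c; apply: val_inj.
by move=> m'; rewrite -E.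
Qed.
End S.

Theorem lemma2p4 (R : realType) (K : topologicalZmodType)
  (X : topologicalLmodType R[i]) :
  hausdorff_space X ->
  compact [set: K] \/ torsion_group K ->
  polys K X = polys_le K X 0.
Proof.
move=> hX hK; apply/seteqP; split; last first.
  by move=> p hp; exists 0%N.
move=> p [n _ [pc hp]]; split => // s t.
have [c hc] := hp s t.
exists (fun _ => c ord0) => m.
rewrite big_ord1 expr0 scale1r hc.
suff [A [cA hA]] : exists A : set X, compact A /\ forall m, A (p (s + t *+ m)).
  apply: (@poly_const R X hX A cA n c) => m'; rewrite -hc; exact: hA.
case: hK => [cK|tK].
  exists (p @` setT); split.
    apply: continuous_compact => //; exact: continuous_subspaceT.
  by move=> m'; exists (s + t *+ m').
have [N [N0 tN]] := tK t.
exists ((fun m => p (s + t *+ m)) @` `I_N); split.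
  apply: finite_compact; apply: finite_image; exact: finite_II.
move=> m'; exists (m' %% N)%N => /=; first by rewrite /= ltn_pmod.
by rewrite {2}(divn_eq m' N) mulrnDr mulnC mulrnA tN mul0rn add0r.
Qed.
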